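(* Let $\rho_{AB}$ be a state on a finite-dimensional bipartite system $A\otimes B$. Then $$Q^{AB}_{\mathcal N}(\rho_{AB})=\min_{\sigma\in\mathcal{CC}}\frac12\|\rho_{AB}-\sigma\|_{l_1}^{\mathcal B_\sigma},$$ where for $\sigma\in\mathcal{CC}$ the $l_1$-norm is computed in a product eigenbasis $\mathcal B_\sigma=\{|a_i\rangle\otimes|b_k\rangle\}$ of $\sigma$ (chosen optimally, i.e. the minimum is also over all product orthonormal bases in which $\sigma$ is diagonal).
   Context: $\mathcal{CC}$ (classical-classical states) is the set of states of the form $\sigma=\sum_{i,k}p_{ik}|a_i\rangle\langle a_i|\otimes|b_k\rangle\langle b_k|$ with $\{|a_i\rangle\}$, $\{|b_k\rangle\}$ orthonormal bases of $A$, $B$ and $(p_{ik})$ a probability distribution. For a matrix $X$ and orthonormal basis $\{|e_k\rangle\}$, $\|X\|_{l_1}=\sum_{k,l}|\langle e_k|X|e_l\rangle|$. Negativity: $\mathcal N_{X:Y}(\tau)=(\|\tau^\Gamma\|_1-1)/2$, $\tau^\Gamma$ partial transpose on one party, $\|\cdot\|_1$ trace norm. For a system $S$ of dimension $m$ with orthonormal basis $\{|s_k\rangle\}$, the measurement interaction is the isometry $V_S:S\to S\otimes S'$ ($S'$ $m$-dimensional, computational basis $\{|k\rangle\}$), $V_S|s_k\rangle=|s_k\rangle|k\rangle$. Two-sided negativity of quantumness: $Q^{AB}_{\mathcal N}(\rho_{AB})=\min\mathcal N_{AB:A'B'}\big((V_A\otimes V_B)\rho_{AB}(V_A\otimes V_B)^\dagger\big)$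 over orthonormal bases of $A$ and $B$. *)

(* Defs.v *)
From HB Require Import structures.
From mathcomp Require Import all_boot all_order all_algebra.
From mathcomp Require Import complex mxtens.
From mathcomp Require Import classical_sets reals.

Set Implicit Arguments.
Unset Strict Implicit.
Unset Printing Implicit Defensive.

Import Order.TTheory GRing.Theory Num.Theory.
Local Open Scope ring_scope.
Local Open Scope classical_set_scope.

Section QuantumDefs.
Variable R : realType.
Local Notation C := R[i].

Definition adjmx m n (X : 'M[C]_(m, n)) : 'M[C]_(n, m) := (map_mx Num.conj X)^T.

(* The columns of U form an orthonormal basis of C^m. *)
Definition onb m (U : 'M[C]_m) : Prop := adjmx U *m U = 1%:M.

Definition is_state k (rho : 'M[C]_k) : Prop :=
  [/\ adjmx rho = rho,
      (forall v : 'cV[C]_k, 0 <= (adjmx v *m rho *m v) 0 0)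
    & \tr rho = 1].

(* Trace norm ||X||_1 = Tr sqrt(X^dagger X) = sum of the square roots of the
   eigenvalues of the (positive semidefinite) matrix X^dagger X. *)
Definition trace_norm k (X : 'M[C]_k) : R :=
  \sum_(j < k) Num.sqrt (complex.Re (spectral_diag (adjmx X *m X) 0 j)).

(* l1-norm of X in the orthonormal basis given by the columns of W. *)
Definition l1_norm k (W X : 'M[C]_k) : R :=
  \sum_(a < k) \sum_(b < k) complex.Re `|(adjmx W *m X *m W) a b|.

Definition negativity k (tauG : 'M[C]_k) : R := (trace_norm tauG - 1) / 2.

Definition ket m (j : 'I_m) : 'cV[C]_m := delta_mx j 0.

(* Measurement isometry V_S : S -> S (x) S',  V_S |s_k> = |s_k>|k>,
   where |s_k> is the k-th column of U:  V_S = sum_k (|s_k> (x) |k>) <s_k|. *)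
Definition measV m (U : 'M[C]_m) : 'M[C]_(m * m, m) :=
  \sum_(j < m) ((col j U *t ket j) *m adjmx (col j U)).

(* Partial transpose on the primed subsystems A'B' of an operator on
   (A (x) A') (x) (B (x) B'), with A, A' of dim m and B, B' of dim n;
   index conventions are those of the Kronecker product *t. *)
Definition ptrans_primed m n (T : 'M[C]_((m * m) * (n * n))) :
    'M[C]_((m * m) * (n * n)) :=
  \matrix_(p, q)
    let pa := (mxtens_unindex (mxtens_unindex p).1) in
    let pb := (mxtens_unindex (mxtens_unindex p).2) in
    let qa := (mxtens_unindex (mxtens_unindex q).1) in
    let qb := (mxtens_unindex (mxtens_unindex q).2) in
    T (mxtens_index (mxtens_index (pa.1, qa.2), mxtens_index (pb.1, qb.2)))
      (mxtens_index (mxtens_index (qa.1, pa.2), mxtens_index (qb.1, pb.2))).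

Definition measured m n (UA : 'M[C]_m) (UB : 'M[C]_n) (rho : 'M[C]_(m * n)) :
    'M[C]_((m * m) * (n * n)) :=
  (measV UA *t measV UB) *m rho *m adjmx (measV UA *t measV UB).

Definition QN m n (rho : 'M[C]_(m * n)) : R :=
  inf [set x | exists (UA : 'M[C]_m) (UB : 'M[C]_n),
         [/\ onb UA, onb UB &
             x = negativity (ptrans_primed (measured UA UB rho))]].

Definition isCC m n (sigma : 'M[C]_(m * n)) : Prop :=
  exists (UA : 'M[C]_m) (UB : 'M[C]_n) (p : 'I_m -> 'I_n -> R),
    [/\ onb UA, onb UB,
        (forall i k, 0 <= p i k),
        \sum_(i < m) \sum_(k < n) p i k = 1 &
        sigma = \sum_(i < m) \sum_(k < n)
                  (((p i k)%:C)%C *: ((col i UA *m adjmx (col i UA))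
                                  *t (col k UB *m adjmx (col k UB))))].

Definition CC_l1_values m n (rho : 'M[C]_(m * n)) : set R :=
  [set x | exists (sigma : 'M[C]_(m * n)) (UA : 'M[C]_m) (UB : 'M[C]_n),
     [/\ isCC sigma, onb UA, onb UB,
         is_diag_mx (adjmx (UA *t UB) *m sigma *m (UA *t UB)) &
         x = l1_norm (UA *t UB) (rho - sigma) / 2]].

End QuantumDefs.

(* Main.v *)
Require Import Defs.
From HB Require Import structures.
From mathcomp Require Import all_boot all_order all_algebra.
From mathcomp Require Import complex mxtens spectral sesquilinear.
From mathcomp Require Import classical_sets reals.
From mathcomp Require Import ring.
Set Implicit Arguments. Unset Strict Implicit. Unset Printing Implicit Defensive.
Import Order.TTheory GRing.Theory Num.Theory.
Local Open Scope ring_scope.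
Local Open Scope classical_set_scope.
Section S.
Variable R : realType.
Local Notation C := R[i].
Local Notation idx := mxtens_index.

Lemma adjmxE m n (X : 'M[C]_(m,n)) i j : adjmx X i j = (X j i)^*.
Proof. by rewrite /adjmx !mxE. Qed.

Lemma adjE m n (X : 'M[C]_(m,n)) : adjmx X = (X ^t* )%sesqui.
Proof. by apply/matrixP => i j; rewrite !mxE. Qed.

Lemma adjmx_mul m n p (A : 'M[C]_(m,n)) (B : 'M[C]_(n,p)) :
  adjmx (A *m B) = adjmx B *m adjmx A.
Proof. by rewrite /adjmx map_mxM trmx_mul. Qed.

Lemma adjmxK m n (A : 'M[C]_(m,n)) : adjmx (adjmx A) = A.
Proof. by apply/matrixP => i j; rewrite !adjmxE conjCK. Qed.

Lemma adjmx1 n : adjmx (1%:M : 'M[C]_n) = 1%:M.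
Proof. by apply/matrixP => i j; rewrite adjmxE !mxE eq_sym; case: eqP; rewrite ?conjC0 ?conjC1. Qed.

Lemma adjmx_diag n (c : 'rV[C]_n) : adjmx (diag_mx c) = diag_mx (map_mx Num.conj c).
Proof.
apply/matrixP => i j; rewrite adjmxE !mxE eq_sym.
by case: eqP => [->|_]; rewrite ?mulr1n ?mulr0n ?conjC0.
Qed.

Lemma adjmx_tens m n p q (A : 'M[C]_(m,n)) (B : 'M[C]_(p,q)) :
  adjmx (A *t B) = adjmx A *t adjmx B.
Proof. by apply/matrixP => i j; rewrite !mxE rmorphM. Qed.

Lemma tens11 m n : (1%:M : 'M[C]_m) *t (1%:M : 'M[C]_n) = 1%:M.
Proof.
apply/matrixP => i j.
case: (mxtens_indexP i) => i1 i2; case: (mxtens_indexP j) => j1 j2.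
rewrite tensmxE !mxE (inj_eq (can_inj (@mxtens_indexK m n))) xpair_eqE.
by case: (i1 == j1); case: (i2 == j2); rewrite /= ?mulr1 ?mulr0 ?mul0r.
Qed.

Lemma onb_sym n (U : 'M[C]_n) : onb U -> U *m adjmx U = 1%:M.
Proof. by move=> h; apply: mulmx1C. Qed.

Lemma onb_tens m n (A : 'M[C]_m) (B : 'M[C]_n) : onb A -> onb B -> onb (A *t B).
Proof. by rewrite /onb => hA hB; rewrite adjmx_tens tensmx_mul hA hB tens11. Qed.

Lemma onb1 n : onb (1%:M : 'M[C]_n).
Proof. by rewrite /onb adjmx1 mulmx1. Qed.

Lemma sum_tens m n (F : 'I_(m * n) -> C) :
  \sum_(i < m * n) F i = \sum_(i < m) \sum_(j < n) F (mxtens_index (i, j)).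
Proof.
rewrite pair_big /= (reindex (@mxtens_index m n)) /=.
  by apply: eq_bigr => -[i j].
by exists (@mxtens_unindex m n) => i _; rewrite (mxtens_indexK, mxtens_unindexK).
Qed.

Lemma sum_tensR m n (F : 'I_(m * n) -> R) :
  \sum_(i < m * n) F i = \sum_(i < m) \sum_(j < n) F (mxtens_index (i, j)).
Proof.
rewrite pair_big /= (reindex (@mxtens_index m n)) /=.
  by apply: eq_bigr => -[i j].
by exists (@mxtens_unindex m n) => i _; rewrite (mxtens_indexK, mxtens_unindexK).
Qed.

Lemma sum_if n (a : 'I_n) (F : 'I_n -> C) :
  \sum_(j < n) (if j == a then F j else 0) = F a.
Proof. by rewrite -big_mkcond big_pred1_eq. Qed.


Lemma charpoly_sim n (P A B : 'M[C]_n) : P \in unitmx -> P *m A = B *m P ->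
  char_poly A = char_poly B.
Proof.
move=> Pu hPA.
have h : map_mx polyC P *m char_poly_mx A = char_poly_mx B *m map_mx polyC P.
  by rewrite /char_poly_mx mulmxBr mulmxBl -!map_mxM hPA scalar_mxC.
have := congr1 determinant h; rewrite !det_mulmx det_map_mx /char_poly.
rewrite [_ * (\det P)%:P]mulrC => /mulfI; apply.
by rewrite polyC_eq0 -unitfE -unitmxE.
Qed.

Lemma charpoly_diag n (d : 'rV[C]_n) :
  char_poly (diag_mx d) = \prod_(x <- [seq d 0 j | j <- enum 'I_n]) ('X - x%:P).
Proof.
rewrite char_poly_trig ?diag_mx_is_trig // big_map big_enum /=.
by apply: eq_bigr => j _; rewrite mxE eqxx mulr1n.
Qed.

Lemma spec_perm n (Z : 'M[C]_n) (e : 'rV[C]_n) : onb Z ->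
  perm_eq [seq spectral_diag (Z *m diag_mx e *m adjmx Z) 0 j | j <- enum 'I_n]
          [seq e 0 j | j <- enum 'I_n].
Proof.
move=> hZ; set A := Z *m diag_mx e *m adjmx Z.
have Zu : adjmx Z \is unitarymx by apply/unitarymxP; rewrite -adjE adjmxK.
have Aeq : A = invmx (adjmx Z) *m diag_mx e *m adjmx Z.
  by rewrite invmx_unitary // -adjE adjmxK.
have An : A \is normalmx.
  by apply/orthomx_spectral_subproof; exists (adjmx Z, e).
move/orthomx_spectralP: An => Asp.
apply: prod_XsubC_eq; rewrite -!charpoly_diag.
set P := spectralmx A.
have Pu : P \in unitmx by apply: spectral_unit.
have Zu' : adjmx Z \in unitmx by apply: unitarymx_unit.
rewrite -(@charpoly_sim _ P A (diag_mx (spectral_diag A))) //; last first.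
  by rewrite {1}Asp !mulmxA mulmxV // mul1mx.
rewrite (@charpoly_sim _ (adjmx Z) A (diag_mx e)) //.
by rewrite {1}Aeq !mulmxA mulmxV // mul1mx.
Qed.

Lemma sum_spec n (Z : 'M[C]_n) (e : 'rV[C]_n) (f : C -> R) : onb Z ->
  \sum_(j < n) f (spectral_diag (Z *m diag_mx e *m adjmx Z) 0 j) = \sum_(j < n) f (e 0 j).
Proof.
move=> hZ; have := perm_big (x := (0:R)) (op := +%R) (P := xpredT) (F := f) _ (spec_perm e hZ).
by rewrite !big_map -!enumT !big_enum.
Qed.


Lemma sqrt_Re_normsq (c : C) : Num.sqrt (complex.Re (c^* * c)) = complex.Re `|c|.
Proof. by rewrite mulrC -sqr_normc -add_Re2_Im2 normc_def. Qed.

Lemma Re_norm_ge0 (c : C) : 0 <= complex.Re `|c|.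
Proof. by rewrite normc_def /= sqrtr_ge0. Qed.

Lemma tn_svd k (Wm Z : 'M[C]_k) (c : 'rV[C]_k) : onb Wm -> onb Z ->
  trace_norm (Wm *m diag_mx c *m adjmx Z) = \sum_(j < k) complex.Re `|c 0 j|.
Proof.
move=> hW hZ; rewrite /trace_norm.
have -> : adjmx (Wm *m diag_mx c *m adjmx Z) *m (Wm *m diag_mx c *m adjmx Z)
   = Z *m diag_mx (\row_j ((c 0 j)^* * c 0 j)) *m adjmx Z.
  rewrite !adjmx_mul adjmxK adjmx_diag !mulmxA -[_ *m adjmx Wm *m Wm]mulmxA hW mulmx1.
  rewrite -[_ *m diag_mx _ *m diag_mx c]mulmxA; congr (_ *m _ *m _).
  apply/matrixP => i j; rewrite mul_diag_mx !mxE.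
  by case: eqP => [->|]; rewrite ?mulr1n ?mulr0n ?mulr0.
rewrite (sum_spec _ (fun z => Num.sqrt (complex.Re z))) //.
by apply: eq_bigr => j _; rewrite mxE sqrt_Re_normsq.
Qed.

Lemma measVE m (U : 'M[C]_m) a a' c : measV U (idx (a, a')) c = U a a' * (U c a')^*.
Proof.
rewrite /measV summxE (bigD1 a') //= big1 ?addr0.
  rewrite !mxE big_ord1 !mxE !mxtens_indexK /=.
  by rewrite eqxx -val_eqE /= mulr1.
move=> i ne; rewrite !mxE big_ord1 !mxE !mxtens_indexK /= eq_sym (negbTE ne).
by rewrite mulr0 mul0r.
Qed.

Lemma sum_delta1 k (a : 'I_k) (F : 'I_k -> C) : \sum_j ((j == a)%:R * F j) = F a.
Proof.
by rewrite (bigD1 a) //= eqxx mul1r big1 ?addr0 // => j /negbTE ->; rewrite mul0r.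
Qed.

Section Meas.
Variables (m n : nat) (UA : 'M[C]_m) (UB : 'M[C]_n) (rho : 'M[C]_(m * n)).

Definition Wb := UA *t UB.
Definition rhop := adjmx Wb *m rho *m Wb.

Lemma WbE a b c d : Wb (idx (a, b)) (idx (c, d)) = UA a c * UB b d.
Proof. by rewrite /Wb tensmxE. Qed.

Lemma VE a a' b b' x :
  (measV UA *t measV UB) (idx (idx (a, a'), idx (b, b'))) x
   = UA a a' * UB b b' * (Wb x (idx (a', b')))^*.
Proof.
case: (mxtens_indexP x) => c d.
by rewrite tensmxE !measVE WbE rmorphM /=; ring.
Qed.

Lemma rhopE u v : rhop u v = \sum_y (\sum_x (Wb x u)^* * rho x y) * Wb y v.
Proof. by rewrite /rhop !mxE; apply: eq_bigr => y _; rewrite !mxE; congr (_ * _);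
  apply: eq_bigr => x _; rewrite adjmxE. Qed.

Lemma measuredE a a' b b' c c' d d' :
  measured UA UB rho (idx (idx (a, a'), idx (b, b'))) (idx (idx (c, c'), idx (d, d')))
  = UA a a' * UB b b' * (UA c c' * UB d d')^* * rhop (idx (a', b')) (idx (c', d')).
Proof.
rewrite /measured rhopE mxE mulr_sumr.
under eq_bigr => y _ do rewrite adjmxE VE mxE.
apply: eq_bigr => y _; rewrite !mulr_suml mulr_sumr; apply: eq_bigr => x _.
rewrite VE !rmorphM /= conjCK; ring.
Qed.

Lemma ptE a a' b b' c c' d d' :
  ptrans_primed (measured UA UB rho) (idx (idx (a, a'), idx (b, b'))) (idx (idx (c, c'), idx (d, d')))
  = UA a c' * UB b d' * (UA c a' * UB d b')^* * rhop (idx (c', d')) (idx (a', b')).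
Proof. by rewrite /ptrans_primed mxE !mxtens_indexK /= measuredE. Qed.


Definition Kmx : 'M[C]_((m * m) * (n * n)) :=
  (UA *t (1%:M : 'M[C]_m)) *t (UB *t (1%:M : 'M[C]_n)).

Lemma KE a a' b b' s s' t t' :
  Kmx (idx (idx (a, a'), idx (b, b'))) (idx (idx (s, s'), idx (t, t')))
  = UA a s * (a' == s')%:R * (UB b t * (b' == t')%:R).
Proof. by rewrite /Kmx !tensmxE !mxE. Qed.

Definition sw (p : 'I_((m * m) * (n * n))) : 'I_((m * m) * (n * n)) :=
  idx (idx ((mxtens_unindex (mxtens_unindex p).1).2, (mxtens_unindex (mxtens_unindex p).1).1),
       idx ((mxtens_unindex (mxtens_unindex p).2).2, (mxtens_unindex (mxtens_unindex p).2).1)).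

Lemma swE s a t b : sw (idx (idx (s, a), idx (t, b))) = idx (idx (a, s), idx (b, t)).
Proof. by rewrite /sw !mxtens_indexK. Qed.

Lemma swK : involutive sw.
Proof.
move=> p; case: (mxtens_indexP p) => u v; case: (mxtens_indexP u) => s a;
case: (mxtens_indexP v) => t b; by rewrite !swE.
Qed.

Definition Zmx : 'M[C]_((m * m) * (n * n)) := \matrix_(q, p) Kmx q (sw p).

Definition gv : 'rV[C]_((m * m) * (n * n)) :=
  \row_p rhop (idx ((mxtens_unindex (mxtens_unindex p).1).1, (mxtens_unindex (mxtens_unindex p).2).1))
              (idx ((mxtens_unindex (mxtens_unindex p).1).2, (mxtens_unindex (mxtens_unindex p).2).2)).

Lemma gE s a t b : gv 0 (idx (idx (s, a), idx (t, b))) = rhop (idx (s, t)) (idx (a, b)).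
Proof. by rewrite /gv mxE !mxtens_indexK. Qed.

Hypotheses (hA : onb UA) (hB : onb UB).

Lemma onbK : onb Kmx.
Proof. by apply: onb_tens; apply: onb_tens => //; apply: onb1. Qed.

Lemma onbZ : onb Zmx.
Proof.
apply/matrixP => p p'; have := onbK => /matrixP /(_ (sw p) (sw p')).
rewrite !mxE => h; rewrite -(inj_eq (can_inj swK)) -h.
by apply: eq_big => // q _; rewrite !adjmxE !mxE.
Qed.

Lemma sum4 (F : 'I_m -> 'I_m -> 'I_n -> 'I_n -> C) x1 x2 x3 x4 :
  \sum_(i < m) \sum_(j < m) \sum_(k < n) \sum_(l < n)
     ((i == x1)%:R * (j == x2)%:R * (k == x3)%:R * (l == x4)%:R * F i j k l)
  = F x1 x2 x3 x4.
Proof.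
transitivity (\sum_(i < m) (i == x1)%:R * \sum_(j < m) (j == x2)%:R *
   \sum_(k < n) (k == x3)%:R * \sum_(l < n) (l == x4)%:R * F i j k l).
  apply: eq_bigr => i _; rewrite !mulr_sumr; apply: eq_bigr => j _.
  rewrite !mulr_sumr; apply: eq_bigr => k _; rewrite !mulr_sumr; apply: eq_bigr => l _.
  by rewrite !mulrA.
by rewrite !sum_delta1.
Qed.

Lemma decomp : ptrans_primed (measured UA UB rho) = Kmx *m diag_mx gv *m adjmx Zmx.
Proof.
apply/matrixP => P Q.
case: (mxtens_indexP P) => u v; case: (mxtens_indexP u) => a a';
case: (mxtens_indexP v) => b b'.
case: (mxtens_indexP Q) => u' v'; case: (mxtens_indexP u') => c c';
case: (mxtens_indexP v') => d d'.
rewrite ptE mul_mx_diag [RHS]mxE sum_tens sum_tens.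
under eq_bigr => s _ do under eq_bigr => s' _ do rewrite sum_tens.
pose F := (fun s s' t t' => UA a s * UB b t * rhop (idx (s, t)) (idx (s', t'))
   * (UA c s' * UB d t')^*).
transitivity (F c' a' d' b'); first by rewrite /F; ring.
rewrite -(sum4 F c' a' d' b').
apply: eq_bigr => s _; apply: eq_bigr => s' _; apply: eq_bigr => t _; apply: eq_bigr => t' _.
rewrite (adjmxE Zmx) [X in _ = X * _]mxE [Zmx _ _]mxE swE !KE gE !rmorphM /= !conjC_nat.
rewrite /F (eq_sym a') (eq_sym b') (eq_sym c') (eq_sym d'); ring.
Qed.


Definition total := \sum_(x < m * n) \sum_(y < m * n) complex.Re `|rhop x y|.

Lemma total_ge0 : 0 <= total.
Proof. by apply: sumr_ge0 => x _; apply: sumr_ge0 => y _; apply: Re_norm_ge0. Qed.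

Lemma neg_val : negativity (ptrans_primed (measured UA UB rho)) = (total - 1) / 2.
Proof.
rewrite /negativity decomp tn_svd; [|exact: onbK|exact: onbZ].
suff -> : \sum_(j < m * m * (n * n)) complex.Re `|gv 0 j| = total by [].
rewrite /total [LHS]sum_tensR [LHS]sum_tensR.
under eq_bigr => s _ do under eq_bigr => a _ do rewrite sum_tensR.
rewrite [RHS]sum_tensR.
under [RHS]eq_bigr => s _ do under eq_bigr => t _ do rewrite sum_tensR.
apply: eq_bigr => s _; rewrite exchange_big /=.
apply: eq_bigr => t _; apply: eq_bigr => a _; apply: eq_bigr => b _.
by rewrite gE.
Qed.


Hypothesis hrho : is_state rho.

Lemma onbW : onb Wb.
Proof. exact: onb_tens. Qed.

Lemma rhop_ge0 x : 0 <= rhop x x.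
Proof.
case: hrho => _ hpsd _; have := hpsd (col x Wb).
suff -> : (adjmx (col x Wb) *m rho *m col x Wb) 0 0 = rhop x x by [].
rewrite /rhop !mxE; apply: eq_bigr => y _; rewrite !mxE; congr (_ * _).
by apply: eq_bigr => z _; rewrite !mxE.
Qed.

Lemma tr_rhop : \sum_x rhop x x = 1.
Proof.
case: hrho => _ _ htr; rewrite -htr.
have -> : \sum_x rhop x x = \tr rhop by [].
by rewrite /rhop mxtrace_mulC mulmxA onb_sym ?mul1mx //; exact: onbW.
Qed.


Lemma Re_real (z : C) : 0 <= z -> ((complex.Re z)%:C)%C = z.
Proof. by move=> /ger0_Im; case: z => a b /= ->. Qed.

Lemma Re_norm_pos (z : C) : 0 <= z -> complex.Re `|z| = complex.Re z.
Proof. by move=> h; rewrite ger0_norm. Qed.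

Lemma sum_Re_diag : \sum_x complex.Re (rhop x x) = 1.
Proof.
have -> : \sum_x complex.Re (rhop x x) = complex.Re (((\sum_x complex.Re (rhop x x))%:C)%C) by [].
rewrite rmorph_sum /=.
under eq_bigr => x _ do rewrite Re_real ?rhop_ge0 //.
by rewrite tr_rhop.
Qed.

Lemma sum_delta1R k (a : 'I_k) (F : 'I_k -> R) : \sum_j ((j == a)%:R * F j) = F a.
Proof.
by rewrite (bigD1 a) //= eqxx mul1r big1 ?addr0 // => j /negbTE ->; rewrite mul0r.
Qed.

Lemma sum_form : \sum_x \sum_y (complex.Re `|rhop x y| - (y == x)%:R * complex.Re (rhop x x))
   = total - 1.
Proof.
rewrite -[in RHS]sum_Re_diag /total -sumrB; apply: eq_bigr => x _.
by rewrite sumrB sum_delta1R.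
Qed.

Lemma l1_lb (D : 'M[C]_(m * n)) :
  (forall x y, x != y -> D x y = 0) ->
  total - 1 <= \sum_x \sum_y complex.Re `|rhop x y - D x y|.
Proof.
move=> hD; rewrite -sum_form.
apply: ler_sum => x _; apply: ler_sum => y _.
case: (eqVneq y x) => [->|ne].
  by rewrite mul1r Re_norm_pos ?rhop_ge0 // subrr Re_norm_ge0.
by rewrite mul0r subr0 hD ?subr0 // eq_sym.
Qed.


Lemma subE k (A B : 'M[C]_k) i j : (A - B) i j = A i j - B i j.
Proof. by rewrite !mxE. Qed.

Lemma diagE k (d : 'rV[C]_k) i j : diag_mx d i j = d 0 i *+ (i == j).
Proof. by rewrite mxE. Qed.

Lemma lb_CC (sig : 'M[C]_(m * n)) : is_diag_mx (adjmx Wb *m sig *m Wb) ->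
  (total - 1) / 2 <= l1_norm Wb (rho - sig) / 2.
Proof.
move=> /is_diag_mxP hD; apply: ler_wpM2r; first by rewrite invr_ge0 ler0n.
rewrite /l1_norm mulmxBr mulmxBl -/Wb -/rhop.
under eq_bigr => x _ do under eq_bigr => y _ do rewrite subE.
apply: l1_lb => x y ne; apply: hD; by rewrite val_eqE.
Qed.

Definition dv : 'rV[C]_(m * n) := \row_x rhop x x.
Lemma dvE x : dv 0 x = rhop x x.
Proof. by rewrite /dv mxE. Qed.

Definition sig0 := Wb *m diag_mx dv *m adjmx Wb.

Lemma sig0_diag : adjmx Wb *m sig0 *m Wb = diag_mx dv.
Proof.
have hW := onbW.
by rewrite /sig0 !mulmxA hW mul1mx -mulmxA hW mulmx1.
Qed.

Lemma sig0_l1 : l1_norm Wb (rho - sig0) / 2 = (total - 1) / 2.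
Proof.
congr (_ / _); rewrite /l1_norm mulmxBr mulmxBl -/Wb -/rhop sig0_diag.
rewrite -sum_form; apply: eq_bigr => x _; apply: eq_bigr => y _.
rewrite subE diagE dvE.
have [e|ne] : x = y \/ x != y by case: eqP; [left|right].
  rewrite e eqxx mulr1n mul1r subrr (Re_norm_pos (rhop_ge0 y)) subrr.
  by rewrite normr0.
by rewrite (negbTE ne) eq_sym (negbTE ne) mulr0n mul0r !subr0.
Qed.


Lemma sig0E P Q : sig0 P Q = \sum_x Wb P x * rhop x x * (Wb Q x)^*.
Proof.
rewrite /sig0 mul_mx_diag mxE; apply: eq_bigr => x _.
by rewrite (adjmxE Wb) [(\matrix_(i, j) _) _ _]mxE dvE.
Qed.

Lemma sig0_CC : isCC sig0.
Proof.
exists UA, UB, (fun i k => complex.Re (rhop (idx (i, k)) (idx (i, k)))); split => //.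
- move=> i k; have := rhop_ge0 (idx (i, k)); rewrite lecE => /andP[_ h]; exact: h.
- by rewrite -[in RHS]sum_Re_diag [RHS]sum_tensR.
apply/matrixP => P Q.
case: (mxtens_indexP P) => p1 p2; case: (mxtens_indexP Q) => q1 q2.
rewrite sig0E sum_tens !summxE; apply: eq_bigr => i _; rewrite summxE; apply: eq_bigr => k _.
rewrite !WbE Re_real ?rhop_ge0 // [RHS]mxE tensmxE !mxE !big_ord1 !mxE rmorphM /=.
ring.
Qed.

End Meas.

Lemma main m n (rho : 'M[C]_(m * n)) : is_state rho -> QN rho = inf (CC_l1_values rho).
Proof.
move=> hr; rewrite /QN.
match goal with |- inf ?X = _ => set E := X end.
have f_lb : forall (UA : 'M[C]_m) (UB : 'M[C]_n), (0 - 1) / 2 <= (total UA UB rho - 1) / 2.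
  move=> UA UB; apply: ler_wpM2r; first by rewrite invr_ge0 ler0n.
  by rewrite lerB // total_ge0.
have inE : forall (UA : 'M[C]_m) (UB : 'M[C]_n), onb UA -> onb UB ->
    E ((total UA UB rho - 1) / 2).
  by move=> UA UB hA hB; exists UA, UB; split => //; rewrite neg_val.
have inCC : forall (UA : 'M[C]_m) (UB : 'M[C]_n), onb UA -> onb UB ->
    CC_l1_values rho ((total UA UB rho - 1) / 2).
  move=> UA UB hA hB; exists (sig0 UA UB rho), UA, UB; split => //.
  - exact: sig0_CC.
  - by rewrite sig0_diag // diag_mx_is_diag.
  - by rewrite sig0_l1.
have Ene : E !=set0 by exists ((total 1%:M 1%:M rho - 1) / 2); apply: inE; exact: onb1.
have CCne : CC_l1_values rho !=set0.
  by exists ((total 1%:M 1%:M rho - 1) / 2); apply: inCC; exact: onb1.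
have Elb : has_lbound E.
  exists ((0 - 1) / 2) => x [UA [UB [hA hB ->]]]; rewrite neg_val //; exact: f_lb.
have CClb : has_lbound (CC_l1_values rho).
  exists ((0 - 1) / 2) => x [sig [UA [UB [hcc hA hB hd ->]]]].
  exact: le_trans (f_lb UA UB) (lb_CC hA hB hr hd).
apply/le_anti/andP; split.
  apply: (lb_le_inf CCne) => y [sig [UA [UB [hcc hA hB hd ->]]]].
  apply: le_trans (lb_CC hA hB hr hd).
  exact: ge_inf Elb _ (inE UA UB hA hB).
apply: (lb_le_inf Ene) => x [UA [UB [hA hB ->]]].
rewrite neg_val //; exact: ge_inf CClb _ (inCC UA UB hA hB).
Qed.

End S.

Unset Implicit Arguments.

Theorem theorem9 (R : realType) (m n : nat) (rho : 'M[R[i]]_(m * n)) :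
  is_state rho -> QN rho = inf (CC_l1_values rho).
Proof. exact: main. Qed.
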